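(* Let $P$ be a simple $d$-dimensional $k$-template and let $\kappa\ge\aleph_0$ be a cardinal. If $X$ is a set with $|X|\le\kappa^{+(d-1)}$, then $\chi(L(X^d,P))\le\kappa$.
   Context: Here $1\le d<\omega$, $2\le k<\omega$. A $d$-dimensional $k$-template is a set $P$ of $d$-tuples with $|P|=k$. $P$ is simple if for every $m<d$ there are $x,y\in P$ such that for all $i<d$, $x_i=y_i$ iff $i\neq m$. If $P,Q$ are $d$-dimensional templates, $Q$ is a homomorphic image of $P$ if there is a surjection $f:P\to Q$ such that for all $x,y\in P$ and $i<d$, $x_i=y_i$ implies $f(x)_i=f(y)_i$. $L(X^d,P)$ is the $k$-hypergraph with vertex set $X^d$ whose edges are the $k$-templates $Q\subseteq X^d$ that are homomorphic images of $P$. $\chi$ is the chromatic number (least cardinal number of colors in a vertex coloring not constant on any edge). $\kappa^+$ is the successor cardinal, $\kappa^{+0}=\kappa$, $\kappa^{+(n+1)}=(\kappa^{+n})^+$. *)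

(* Defs.v *)
From mathcomp Require Import all_boot.
Set Implicit Arguments. Unset Strict Implicit. Unset Printing Implicit Defensive.

Definition tup (d : nat) (A : Type) := 'I_d -> A.

Definition enumerates (d k : nat) (A : Type) (e : 'I_k -> tup d A)
    (S : tup d A -> Prop) : Prop :=
  injective e /\ forall x, S x <-> exists a, e a = x.

Definition template (d k : nat) (A : Type) (P : tup d A -> Prop) : Prop :=
  exists e : 'I_k -> tup d A, enumerates e P.

Definition simple_template (d : nat) (A : Type) (P : tup d A -> Prop) : Prop :=
  forall m : 'I_d, exists x y, P x /\ P y /\
    (forall i : 'I_d, x i = y i <-> i <> m).

Definition hom_image (d : nat) (A B : Type)
    (P : tup d A -> Prop) (Q : tup d B -> Prop) : Prop :=
  exists f : tup d A -> tup d B,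
    (forall x, P x -> Q (f x)) /\
    (forall y, Q y -> exists x, P x /\ f x = y) /\
    (forall x y, P x -> P y -> forall i : 'I_d, x i = y i -> f x i = f y i).

Definition L_edge (d k : nat) (A X : Type) (P : tup d A -> Prop)
    (Q : tup d X -> Prop) : Prop :=
  template k Q /\ hom_image P Q.

Definition proper_coloring (d k : nat) (A X C : Type) (P : tup d A -> Prop)
    (c : tup d X -> C) : Prop :=
  forall Q, L_edge k P Q -> ~ (exists col, forall x, Q x -> c x = col).

Definition strict_wellorder (X : Type) (R : X -> X -> Prop) : Prop :=
  well_founded R /\ (forall x y z, R x y -> R y z -> R x z) /\
  (forall x y, x = y \/ R x y \/ R y x).

(* card_le_succ n K X  <->  |X| <= |K|^{+n}.
   |X| <= mu^+  iff X admits a well-order all of whose proper initial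
   segments have cardinality <= mu (mu^+ = set of ordinals of size <= mu). *)
Fixpoint card_le_succ (n : nat) (K X : Type) : Prop :=
  match n with
  | 0 => exists f : X -> K, injective f
  | S n' => exists R : X -> X -> Prop, strict_wellorder R /\
            forall x : X, card_le_succ n' K {y : X | R y x}
  end.

Definition infinite_type (K : Type) : Prop := exists f : nat -> K, injective f.

(* Main.v *)
From mathcomp Require Import all_boot.
From mathcomp Require classical_sets boolp.
From Stdlib Require Import ClassicalEpsilon Lia Classical FunctionalExtensionality.
From mathcomp Require Import zify.
Require Import Defs.
From Stdlib Require Import Wellfounded.
Set Implicit Arguments. Unset Strict Implicit.
Lemma my_zorn (T : Type) (P : (T -> Prop) -> Prop) :
  (forall F : (T -> Prop) -> Prop, (forall A, F A -> P A) ->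
     (forall A B, F A -> F B -> (forall t, A t -> B t) \/ (forall t, B t -> A t)) ->
     P (fun t => exists A, F A /\ A t)) ->
  exists A, P A /\ forall B, (forall t, A t -> B t) -> ~ (forall t, B t -> A t) -> ~ P B.
Proof.
move=> H.
case: (@classical_sets.Zorn_bigcup T P).
  move=> F FP Ftot.
  have -> : classical_sets.bigcup F id = (fun t => exists A, F A /\ A t).
    apply: boolp.funext => t; apply: boolp.propext; split.
      by case=> A FA At; exists A.
    by case=> A [FA At]; exists A.
  apply: H => // A B FA FB; exact: Ftot.
move=> A [PA Am].
exists A; split => // B AB nBA PB; apply: (Am B) => //; split => //.
Qed.

Definition good_graph (K : Type) (G : ((K * bool) * K) -> Prop) :=
  [/\ (forall a v w, G (a, v) -> G (a, w) -> v = w),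
      (forall a b v, G (a, v) -> G (b, v) -> a = b),
      (forall k b b' v, G ((k, b), v) -> exists w, G ((k, b'), w)) &
      (forall a v, G (a, v) -> exists w, G ((v, true), w))].

Definition graph_of (K : Type) (s : nat -> K) : ((K * bool) * K) -> Prop :=
  fun t => exists n, t.1.1 = s n /\ t.2 = s (2 * n + t.1.2).

Lemma graph_of_good K (s : nat -> K) : injective s -> good_graph (graph_of s).
Proof.
move=> si; split.
- by move=> [k b] v w [n [/= -> ->]] [m [/= /si <- ->]].
- move=> [k b] [k' b'] v [n [/= -> ->]] [m [/= -> /si]].
  by case: b; case: b' => /= E; (have -> : n = m by lia); [ |exfalso; lia|exfalso; lia|].
- by move=> k b b' v [n [/= -> _]]; exists (s (2 * n + b')); exists n.
- by move=> a v [n [_ /= ->]]; exists (s (2 * (2 * n + a.2) + true)); exists (2 * n + a.2).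
Qed.

Lemma nodedekind (K : Type) (D : K -> Prop) :
  (forall l : list K, exists k, ~ D k /\ ~ List.In k l) ->
  exists s : nat -> K, injective s /\ forall n, ~ D (s n).
Proof.
move=> H.
pose ch l := proj1_sig (constructive_indefinite_description _ (H l)).
have chP l : ~ D (ch l) /\ ~ List.In (ch l) l := proj2_sig (constructive_indefinite_description _ (H l)).
pose fix aux n := if n is n'.+1 then ch (aux n') :: aux n' else nil.
exists (fun n => ch (aux n)); split; last by move=> n; case: (chP (aux n)).
have mem m n : m < n -> List.In (ch (aux m)) (aux n).
  elim: n => // n IH; rewrite ltnS leq_eqVlt => /orP [/eqP -> | /IH]; simpl; auto.
move=> m n /= E; case: (ltngtP m n) => // [/mem | /mem].
  by rewrite E => /(proj2 (chP (aux n))).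
by rewrite -E => /(proj2 (chP (aux m))).
Qed.

Lemma double_inj (K : Type) (f : nat -> K) : injective f ->
  exists h : bool -> K -> K, forall b k b' k', h b k = h b' k' -> b = b' /\ k = k'.
Proof.
move=> fi.
pose P (G : ((K * bool) * K) -> Prop) :=
  good_graph G /\ ((forall t, ~ G t) \/ (forall t, graph_of f t -> G t)).
have [A [[gA A0] Amax]] : exists A, P A /\ forall B, (forall t, A t -> B t) ->
    ~ (forall t, B t -> A t) -> ~ P B.
  apply: my_zorn => F FP Ftot; split.
    split.
    - move=> a v w [B [FB Bv]] [C [FC Cw]].
      case: (Ftot _ _ FB FC) => S.
        by case: (FP _ FC) => [[H _ _ _] _]; apply: (H a); auto.
      by case: (FP _ FB) => [[H _ _ _] _]; apply: (H a); auto.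
    - move=> a b v [B [FB Bv]] [C [FC Cw]].
      case: (Ftot _ _ FB FC) => S.
        by case: (FP _ FC) => [[_ H _ _] _]; apply: (H a b v); auto.
      by case: (FP _ FB) => [[_ H _ _] _]; apply: (H a b v); auto.
    - move=> k b b' v [B [FB Bv]].
      case: (FP _ FB) => [[_ _ H _] _]; case: (H _ _ b' _ Bv) => w Bw.
      by exists w; exists B.
    - move=> a v [B [FB Bv]].
      case: (FP _ FB) => [[_ _ _ H] _]; case: (H _ _ Bv) => w Bw.
      by exists w; exists B.
  case: (classic (exists B, F B /\ forall t, graph_of f t -> B t)).
    by case=> B [FB HB]; right => t /HB Bt; exists B.
  move=> nB; left => t [B [FB Bt]]; case: (FP _ FB) => [_ [H|H]].
    exact: (H t).
  by apply: nB; exists B.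
have G0A : forall t, graph_of f t -> A t.
  case: A0 => // H; exfalso; apply: (Amax (graph_of f)).
  - by move=> t /H.
  - move=> HH; apply: (H ((f 0, true), f 1)); apply: HH; exists 0 => /=; auto.
  - by split; [exact: graph_of_good | right].
case: gA => [Afun Ainj Adom Aran].
pose D k := exists v, A ((k, true), v).
have fin : exists l : list K, forall k, ~ D k -> List.In k l.
  apply: NNPP => nfin.
  have [s [si sD]] : exists s : nat -> K, injective s /\ forall n, ~ D (s n).
    apply: nodedekind => l; apply: NNPP => H; apply: nfin; exists l => k Dk.
    by apply: NNPP => Hk; apply: H; exists k.
  pose B t := A t \/ graph_of s t.
  have Ddom k b v : A ((k, b), v) -> D k.
    by move=> /(Adom _ _ true) [w Aw]; exists w.
  have Dran a v : A (a, v) -> D v by move=> /Aran.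
  apply: (Amax B).
  - by move=> t At; left.
  - move=> HB; have : B ((s 0, true), s 1) by right; exists 0.
    by move=> /HB /Ddom /sD.
  split; last by right => t /G0A At; left.
  have [g1 g2 g3 g4] := graph_of_good si.
  split.
  - move=> [k b] v w [Av|Gv] [Aw|Gw]; first exact: (Afun _ _ _ Av Aw).
    + by exfalso; case: Gw => n [/= E _]; apply: (sD n); rewrite -E; apply: Ddom Av.
    + by exfalso; case: Gv => n [/= E _]; apply: (sD n); rewrite -E; apply: Ddom Aw.
    + exact: (g1 _ _ _ Gv Gw).
  - move=> a b v [Av|Gv] [Aw|Gw]; first exact: (Ainj _ _ _ Av Aw).
    + by exfalso; case: Gw => n [_ /= E]; apply: (sD (2 * n + b.2)); rewrite -E; apply: Dran Av.
    + by exfalso; case: Gv => n [_ /= E]; apply: (sD (2 * n + a.2)); rewrite -E; apply: Dran Aw.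
    + exact: (g2 _ _ _ Gv Gw).
  - move=> k b b' v [Av|Gv].
      by case: (Adom _ _ b' _ Av) => w Aw; exists w; left.
    by case: (g3 _ _ b' _ Gv) => w Gw; exists w; right.
  - move=> a v [Av|Gv].
      by case: (Aran _ _ Av) => w Aw; exists w; left.
    by case: (g4 _ _ Gv) => w Gw; exists w; right.
case: fin => l Hl.
have inh : inhabited K := inhabits (f 0).
pose g k b := epsilon inh (fun v => A ((k, b), v)).
have gP k b : D k -> A ((k, b), g k b).
  move=> [v Av]; case: (Adom _ _ b _ Av) => w Aw.
  by apply: (epsilon_spec inh (fun v => A ((k, b), v))); exists w.
have gD k b : D k -> D (g k b) by move=> /(gP _ b) /Aran.
have ginj k b k' b' : D k -> D k' -> g k b = g k' b' -> k = k' /\ b = b'.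
  move=> Dk Dk' E; have := gP _ b Dk; rewrite E => H.
  by have [] := Ainj _ _ _ H (gP _ b' Dk').
have fD n : D (f n).
  by exists (f (2 * n + true)); apply: G0A; exists n.
pose idx k := epsilon (inhabits 0) (fun p => List.nth_error l p = Some k).
have idxP k : ~ D k -> List.nth_error l (idx k) = Some k.
  move=> nD; have [p Hp] := List.In_nth_error _ _ (Hl _ nD).
  by apply: (epsilon_spec (inhabits 0) (fun p => List.nth_error l p = Some k)); exists p.
exists (fun b k => match excluded_middle_informative (D k) with
  | left _ => g (g k b) false
  | right _ => g (f (2 * idx k + b)) true end).
move=> b k b' k'.
case: (excluded_middle_informative (D k)) => Dk;
case: (excluded_middle_informative (D k')) => Dk' E.
- have [E1 _] := ginj _ _ _ _ (gD _ b Dk) (gD _ b' Dk') E.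
  by have [-> ->] := ginj _ _ _ _ Dk Dk' E1.
- by have [_ //] := ginj _ _ _ _ (gD _ b Dk) (fD _) E.
- by have [_ //] := ginj _ _ _ _ (fD _) (gD _ b' Dk') E.
- have [/fi E1 _] := ginj _ _ _ _ (fD _) (fD _) E.
  clear E; have Eb : b = b' by move: E1; case: b; case: b' => // E1; exfalso; lia.
  subst b'; have Ei : idx k = idx k' by lia.
  split => //; have := idxP _ Dk; rewrite Ei idxP //; by case.
Qed.

Lemma enc_inj (K : Type) (h : bool -> K -> K) :
  (forall b k b' k', h b k = h b' k' -> b = b' /\ k = k') ->
  forall i j k k', iter i (h true) (h false k) = iter j (h true) (h false k') ->
  i = j /\ k = k'.
Proof.
move=> hi; elim=> [|i IH] [|j] k k' /=.
- by move=> /hi [].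
- by move=> /hi [].
- by move=> /hi [].
- by move=> /hi [_ /IH [-> ->]].
Qed.

Lemma cls_empty (K : Type) n : forall Z : Type, (Z -> False) -> card_le_succ n K Z.
Proof.
elim: n => [|n IH] Z HZ /=.
  by exists (fun z => match HZ z with end) => z; case: (HZ z).
exists (fun _ _ => False); split.
  split; first by move=> z; constructor => y [].
  by split => // x; case: (HZ x).
by move=> x; apply: IH => [[y []]].
Qed.

Lemma cls_inj (K : Type) n : forall (Y Z : Type) (h : Z -> Y), injective h ->
  card_le_succ n K Y -> card_le_succ n K Z.
Proof.
elim: n => [|n IH] Y Z h hi /=.
  by case=> g gi; exists (fun z => g (h z)) => z z' /gi /hi.
case=> R [[Rwf [Rtr Rtot]] Hs].
exists (fun z z' => R (h z) (h z')); split.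
  split; first exact: (Inverse_Image.wf_inverse_image _ _ R h Rwf).
  split; first by move=> x y z; apply: Rtr.
  by move=> x y; case: (Rtot (h x) (h y)) => [/hi|]; auto.
move=> x; apply: (IH _ _ (fun z : {y | R (h y) (h x)} => exist (fun y => R y (h x)) (h (proj1_sig z)) (proj2_sig z)) _ (Hs (h x))).
move=> [z pz] [z' pz'] [] /hi E; subst z'.
by rewrite (Classical_Prop.proof_irrelevance _ pz pz').
Qed.

Definition optR (Y : Type) (R : Y -> Y -> Prop) (o o' : option Y) : Prop :=
  match o, o' with
  | None, Some _ => True
  | Some x, Some y => R x y
  | _, _ => False
  end.

Lemma cls_option (K : Type) (h : bool -> K -> K) (k0 : K) :
  (forall b k b' k', h b k = h b' k' -> b = b' /\ k = k') ->
  forall n (Y : Type), card_le_succ n K Y -> card_le_succ n K (option Y).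
Proof.
move=> hi; elim=> [|n IH] Y /=.
  case=> g gi; exists (fun o => if o is Some y then h true (g y) else h false k0).
  by move=> [y|] [y'|] /hi [] // _ /gi ->.
case=> R [[Rwf [Rtr Rtot]] Hs].
exists (optR R); split.
  split.
    have AN : Acc (optR R) None by constructor => [[y|]] [].
    move=> [y|]; last exact: AN.
    elim: (Rwf y) => z _ IHz; constructor => [[w|]] Hw; last exact: AN.
    exact: IHz.
  split.
    move=> [x|] [y|] [z|] /= H1 H2; try (exact: I); try (case: H1); try (case: H2).
    exact: Rtr H1 H2.
  move=> [x|] [y|] /=; auto.
  by case: (Rtot x y) => [->|]; auto.
move=> [y|].
  pose m (s : {o | optR R o (Some y)}) : option {z | R z y} :=
    match s with
    | exist None _ => None
    | exist (Some z) p => Some (exist (fun z => R z y) z p)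
    end.
  apply: (cls_inj (h := m)); last exact: IH.
  move=> [[z|] p] [[z'|] p'] /= E; try discriminate.
    case: E => E; subst z'.
    by rewrite (Classical_Prop.proof_irrelevance _ p p').
  by case: p; case: p'.
by apply: cls_empty => [[[z|] []]].
Qed.

Definition Good (n : nat) (K Y : Type) :=
  exists c : tup n.+1 Y -> 'I_n.+1 * K, forall x y (m : 'I_n.+1),
    (forall i, i <> m -> x i = y i) -> x m <> y m -> c x = c y -> (c x).1 <> m.

Lemma max_exists (Y : Type) (R : Y -> Y -> Prop) :
  (forall a, ~ R a a) -> (forall a b c, R a b -> R b c -> R a c) ->
  (forall a b, a = b \/ R a b \/ R b a) ->
  forall N (x : 'I_N.+1 -> Y), exists j, forall i, ~ R (x j) (x i).
Proof.
move=> Rirr Rtr Rtot N x.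
have H : forall s : seq 'I_N.+1, s <> [::] ->
    exists j, j \in s /\ forall i, i \in s -> ~ R (x j) (x i).
  elim=> // b [|b' s] IH _.
    by exists b; split; [rewrite inE | move=> i; rewrite inE => /eqP ->].
  have [j [js jm]] := IH (fun E : b' :: s = [::] => ltac:(discriminate E)).
  case: (classic (R (x j) (x b))) => Hjb.
    exists b; split; first by rewrite inE eqxx.
    move=> i; rewrite inE => /orP [/eqP -> | /jm H]; first exact: Rirr.
    by move=> Hbi; apply: H; apply: Rtr Hjb Hbi.
  exists j; split; first by rewrite inE js orbT.
  by move=> i; rewrite inE => /orP [/eqP -> | /jm].
have ne : enum 'I_N.+1 <> [::].
  by move=> E; have := mem_enum 'I_N.+1 ord0; rewrite E.
have [j [_ Hj]] := H _ ne.
by exists j => i; apply: Hj; rewrite mem_enum.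
Qed.

Lemma good_all (K : Type) (h : bool -> K -> K) (k0 : K) :
  (forall b k b' k', h b k = h b' k' -> b = b' /\ k = k') ->
  forall n (Y : Type), card_le_succ n K Y -> Good n K Y.
Proof.
move=> hi; elim=> [|n IH] Y /=.
  case=> g gi; exists (fun x => (ord0, g (x ord0))).
  move=> x y m _ Hm [] /gi E _; apply: Hm.
  by rewrite (ord1 m).
case=> R [[Rwf [Rtr Rtot]] Hs].
have Rirr : forall a, ~ R a a.
  move=> a; apply: (well_founded_ind Rwf (fun a => ~ R a a)) => z IHz HH.
  exact (IHz z HH HH).
have HG a : Good n K (option {y | R y a}) := IH _ (cls_option k0 hi (Hs a)).
pose Ca a := proj1_sig (constructive_indefinite_description _ (HG a)).
have CaP a : forall (x y : tup n.+1 (option {y | R y a})) (m : 'I_n.+1),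
    (forall i, i <> m -> x i = y i) -> x m <> y m -> Ca a x = Ca a y -> (Ca a x).1 <> m
  := proj2_sig (constructive_indefinite_description _ (HG a)).
have HJ (x : tup n.+2 Y) : exists j, forall i, ~ R (x j) (x i).
  exact: max_exists.
pose J x := proj1_sig (constructive_indefinite_description _ (HJ x)).
have JP x : forall i, ~ R (x (J x)) (x i) :=
  proj2_sig (constructive_indefinite_description _ (HJ x)).
pose proj a z : option {y | R y a} :=
  match excluded_middle_informative (R z a) with
  | left p => Some (exist (fun y => R y a) z p)
  | right _ => None end.
have proj_inj a z z' : ~ R a z -> ~ R a z' -> proj a z = proj a z' -> z = z'.
  rewrite /proj; case: (excluded_middle_informative (R z a));
  case: (excluded_middle_informative (R z' a)) => // p1 p2 n1 n2.
  - by case.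
  - move=> _; case: (Rtot z a) => [->|[//|//]].
    by case: (Rtot z' a) => [->|[//|//]].
pose ys a (j : 'I_n.+2) (x : tup n.+2 Y) : tup n.+1 (option {y | R y a}) :=
  fun i => proj a (x (lift j i)).
pose F (j : 'I_n.+2) a x :=
  (lift j (Ca a (ys a j x)).1, iter j (h true) (h false (Ca a (ys a j x)).2)).
exists (fun x => F (J x) (x (J x)) x).
move=> x y m Hoff Hm Hc Ht.
have [EJ _] := enc_inj hi (f_equal snd Hc).
have {}EJ : J y = J x by apply: val_inj.
move: Hc Ht; rewrite EJ; set j := J x => Hc Ht.
have Hjm : j <> m.
  move=> E; move: Ht; rewrite -E /F /= => /eqP.
  by rewrite eq_sym (negbTE (neq_lift _ _)).
have Ea : y j = x j by symmetry; apply: Hoff.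
move: Hc Ht; rewrite Ea /F /=; set a := x j.
case E1 : (Ca a (ys a j x)) => [t1 v1]; case E2 : (Ca a (ys a j y)) => [t2 v2] /=.
move=> Hc Ht; have Et := lift_inj (f_equal fst Hc); have [_ Ev] := enc_inj hi (f_equal snd Hc).
subst t2 v2.
apply: (CaP a (ys a j x) (ys a j y) t1); last by rewrite E1.
- move=> i Hi; rewrite /ys; congr (proj a _); apply: Hoff => Him.
  by apply: Hi; apply: (@lift_inj _ j); rewrite Him Ht.
- rewrite /ys Ht => Hp; apply: Hm; apply: (proj_inj a _ _ _ _ Hp).
    exact: JP x m.
  by have := JP y m; rewrite EJ -/j Ea.
- by rewrite E1 E2.
Qed.

Lemma hom_inj (d k : nat) (A B : Type) (eP : 'I_k -> tup d A) (eQ : 'I_k -> tup d B)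
  (P : tup d A -> Prop) (Q : tup d B -> Prop) (g : tup d A -> tup d B) :
  enumerates eP P -> enumerates eQ Q ->
  (forall x, P x -> Q (g x)) -> (forall y, Q y -> exists x, P x /\ g x = y) ->
  forall x y, P x -> P y -> g x = g y -> x = y.
Proof.
move=> [ePi HP] [eQi HQ] gPQ gsurj.
have ex a : exists b, eQ b = g (eP a).
  by apply/HQ; apply: gPQ; apply/HP; exists a.
pose gg a := proj1_sig (constructive_indefinite_description _ (ex a)).
have ggP a : eQ (gg a) = g (eP a) := proj2_sig (constructive_indefinite_description _ (ex a)).
have ex2 b : exists a, gg a = b.
  have [x [Px gx]] := gsurj (eQ b) (proj2 (HQ _) (ex_intro _ b erefl)).
  have [a Ea] := proj1 (HP x) Px.
  by exists a; apply: eQi; rewrite ggP Ea gx.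
pose hh b := proj1_sig (constructive_indefinite_description _ (ex2 b)).
have hhP b : gg (hh b) = b := proj2_sig (constructive_indefinite_description _ (ex2 b)).
have hhi : injective hh by move=> b b' E; rewrite -(hhP b) -(hhP b') E.
have [hinv hK hinvK] := injF_bij hhi.
have ggi : injective gg.
  move=> a a' E; rewrite -(hinvK a) -(hinvK a').
  by rewrite -(hhP (hinv a)) -(hhP (hinv a')) !hinvK E.
move=> x y Px Py E.
have [a Ea] := proj1 (HP x) Px; have [a' Ea'] := proj1 (HP y) Py; subst x y.
by congr eP; apply: ggi; apply: eQi; rewrite !ggP -E.
Qed.

Theorem lemma1p4 (d k : nat) (A : Type) (P : tup d A -> Prop) (K X : Type) :
  1 <= d -> 2 <= k ->
  template k P -> simple_template P ->
  infinite_type K ->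
  card_le_succ d.-1 K X ->
  exists c : tup d X -> K, proper_coloring k P c.
Proof.
move=> d1 k2 [eP HeP] Psim [f fi] Hc.
have [h hi] := double_inj fi.
destruct d as [|n]; first by [].
have [cg cgP] := good_all (f 0) hi Hc.
exists (fun x => iter (cg x).1 (h true) (h false (cg x).2)).
move=> Q [[eQ HeQ] [g [gPQ [gsurj ghom]]]] [col Hcol].
have gi := hom_inj HeP HeQ gPQ gsurj.
have k0 : 0 < k by apply: leq_trans k2.
set q0 := eQ (Ordinal k0).
have Qq0 : Q q0 by apply/(proj2 HeQ); exists (Ordinal k0).
have same z : Q z -> cg z = cg q0.
  move=> Qz; have := Hcol z Qz; rewrite -(Hcol q0 Qq0) => /(enc_inj hi) [E1 E2].
  by case: (cg z) E1 E2 => a b; case: (cg q0) => a' b' /= /val_inj -> ->.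
set m := (cg q0).1.
have [x0 [y0 [Px [Py Hxy]]]] := Psim m.
apply: (cgP (g x0) (g y0) m).
- by move=> i Hi; apply: ghom => //; apply/(Hxy i).
- move=> E; have : g x0 = g y0.
    apply: functional_extensionality => i.
    case: (classic (i = m)) => [->|Hi] //.
    by apply: ghom => //; apply/(Hxy i).
  move/(gi _ _ Px Py) => Exy.
  by have := proj1 (Hxy m); rewrite Exy => /(_ erefl).
- by rewrite (same _ (gPQ _ Px)) (same _ (gPQ _ Py)).
- by rewrite (same _ (gPQ _ Px)).
Qed.
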